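(* Define the transformation $T$ on the variables by $T(\tau_j)=\sum_{m\ge0}(-1)^m\binom{j+m}{m}\tau_{j+m}=\tau_j-\binom{j+1}{1}\tau_{j+1}+\binom{j+2}{2}\tau_{j+2}-\cdots$ for $j\ge0$, and set $q_j'=e^{2\pi i T(\tau_j)}$. Then $$\Omega(q_0',q_1',q_2',\ldots)=q_0\,q_1^{-1/2}q_2^{1/3}q_3^{-1/4}\cdots\,\Omega(q_0,q_1,q_2,\ldots),$$ where the prefactor is $\prod_{k\ge0}q_k^{(-1)^k/(k+1)}$.
   Context: For $k\ge0$, $q_k=e^{2\pi i\tau_k}$ and $q_k^a:=e^{2\pi i a\tau_k}$. Let $\xi(s)=\sum_{n\ge1}(n-\tfrac12)^{-s}=(2^s-1)\zeta(s)$ (analytically continued). Define $$\Omega(q_0,q_1,q_2,\ldots)=\prod_{r\ge1,\ r\text{ odd}}q_r^{-\xi(-r)}\prod_{n\ge0}\Big(1+\prod_{k\ge0}q_k^{(n+\frac12)^k}\Big)\Big(1+\prod_{k\ge0}q_k^{(-1)^{k+1}(n+\frac12)^k}\Big).$$ The identity is understood as an identity of formal expansions in the variables $\tau_j$, $j\neq1$, with coefficients functions of $\tau_1$. *)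

(* Defs.v *)
From Stdlib Require Import Reals List Arith.
From Coquelicot Require Import Coquelicot.
Import ListNotations.
Open Scope R_scope.

Definition cexp (z : C) : C := (exp (fst z) * cos (snd z), exp (fst z) * sin (snd z)).
Fixpoint cpow (z : C) (n : nat) : C :=
  match n with O => RtoC 1 | S m => Cmult z (cpow z m) end.
Definition csum (l : list C) : C := fold_right Cplus (RtoC 0) l.
Definition cprod (l : list C) : C := fold_right Cmult (RtoC 1) l.
Definition two_pi_i : C := (0, 2 * PI).

(* B_0 = 1, B_n = -1/(n+1) * sum_{k<n} binom(n+1,k) B_k  (so B_1 = -1/2) *)
Fixpoint bern_upto (n : nat) : list R :=
  match n with
  | O => [1]
  | S m => let l := bern_upto m in
           l ++ [ - / INR (S n) *
                  fold_right Rplus 0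
                    (map (fun k => Binomial.C (S n) k * nth k l 0) (seq 0 n)) ]
  end.
Definition bernoulli (n : nat) : R := nth n (bern_upto n) 0.
(* zeta(-r) = - B_{r+1} / (r+1) for r >= 1 *)
Definition zeta_neg (r : nat) : R := - bernoulli (S r) / INR (S r).
Definition xi_neg (r : nat) : R := (/ 2 ^ r - 1) * zeta_neg r.

(* A multi-index a : list nat encodes the monomial prod_j tau_j^(nth j a 0%nat)
   (trailing zeros irrelevant).  tau_1 is NOT a formal variable: coefficients
   are functions of tau_1 (the second argument, of type C). *)
Definition fps := list nat -> C -> C.

Fixpoint subidx (a : list nat) : list (list nat) :=
  match a with
  | [] => [ [] ]
  | x :: s => flat_map (fun b => map (cons b) (subidx s)) (seq 0 (S x))
  end.
Definition idxsub (a b : list nat) : list nat :=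
  map (fun j => (nth j a 0%nat - nth j b 0%nat)%nat) (seq 0 (length a)).

Definition fps_one : fps :=
  fun a _ => if forallb (fun x => Nat.eqb x 0) a then RtoC 1 else RtoC 0.
Definition fps_add (f g : fps) : fps := fun a z => Cplus (f a z) (g a z).
Definition fps_mul (f g : fps) : fps :=
  fun a z => csum (map (fun b => Cmult (f b z) (g (idxsub a b) z)) (subidx a)).

(* A linear form sum_j L j * tau_j (all j, including j = 1). *)
Definition lin := nat -> C.

(* formal expansion of exp(2 pi i sum_j L_j tau_j): the tau_1 part stays a
   function of tau_1, the other variables are expanded formally. *)
Definition fps_explin (L : lin) : fps :=
  fun a z =>
    if Nat.eqb (nth 1 a 0%nat) 0 then
      Cmult (cexp (Cmult two_pi_i (Cmult (L 1%nat) z)))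
        (cprod (map (fun j => if Nat.eqb j 1 then RtoC 1 else
               Cdiv (cpow (Cmult two_pi_i (L j)) (nth j a 0%nat))
                    (RtoC (INR (fact (nth j a 0%nat)))))
           (seq 0 (length a))))
    else RtoC 0.

(* A "family of variables" t : nat -> lin, t k being the linear form that
   plays the role of tau_k (t k = tau_k, or t k = T(tau_k)).  Both families
   used below are triangular (t k only involves tau_i with i >= k), so the
   coefficient of tau_i in sum_k c_k t_k is the finite sum over k <= i. *)
Definition lincomb (c : nat -> C) (t : nat -> lin) : lin :=
  fun i => csum (map (fun k => Cmult (c k) (t k i)) (seq 0 (S i))).

Definition tvar : nat -> lin := fun k i => if Nat.eqb k i then RtoC 1 else RtoC 0.
(* T(tau_k) = sum_{m>=0} (-1)^m binom(k+m, m) tau_{k+m} *)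
Definition tT : nat -> lin :=
  fun k i => if Nat.leb k i then RtoC ((-1) ^ (i - k) * Binomial.C i (i - k)) else RtoC 0.

Definition c_reg (k : nat) : C := if Nat.odd k then RtoC (- xi_neg k) else RtoC 0.
Definition c_plus (n k : nat) : C := RtoC ((INR n + /2) ^ k).
Definition c_minus (n k : nat) : C := RtoC ((-1) ^ (S k) * (INR n + /2) ^ k).
Definition c_pref (k : nat) : C := RtoC ((-1) ^ k / INR (S k)).

Fixpoint prod_factors (t : nat -> lin) (N : nat) : fps :=
  match N with
  | O => fps_one
  | S n => fps_mul (prod_factors t n)
             (fps_mul (fps_add fps_one (fps_explin (lincomb (c_plus n) t)))
                      (fps_add fps_one (fps_explin (lincomb (c_minus n) t))))
  end.

(* Partial product (n < N) of Omega evaluated at q_k = e^{2 pi i t_k}: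
   prod_{r odd} q_r^{-xi(-r)} prod_{n<N} (1 + prod_k q_k^{(n+1/2)^k})
                                         (1 + prod_k q_k^{(-1)^{k+1}(n+1/2)^k}) *)
Definition Omega_partial (t : nat -> lin) (N : nat) : fps :=
  fps_mul (fps_explin (lincomb c_reg t)) (prod_factors t N).

Definition prefactor : fps := fps_explin (lincomb c_pref tvar).

(* Main.v *)
Require Import Defs.
From Stdlib Require Import Reals List Arith Lia Lra FunctionalExtensionality.
From Coquelicot Require Import Coquelicot.
Import ListNotations.
Open Scope R_scope.

Definition sC (n : nat) (F : nat -> C) : C := csum (map F (seq 0 n)).

Lemma csum_app : forall l1 l2, csum (l1 ++ l2) = Cplus (csum l1) (csum l2).
Proof.
  induction l1; intros; simpl.
  - unfold csum; simpl. ring.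
  - unfold csum in *; simpl. rewrite IHl1. ring.
Qed.

Lemma sC_0 : forall F, sC 0 F = RtoC 0.
Proof. reflexivity. Qed.

Lemma sC_S : forall n F, sC (S n) F = Cplus (sC n F) (F n).
Proof.
  intros. unfold sC. rewrite seq_S, map_app, csum_app. simpl.
  unfold csum; simpl. ring.
Qed.

Lemma sC_first : forall n F, sC (S n) F = Cplus (F 0%nat) (sC n (fun k => F (S k))).
Proof.
  intros. unfold sC. simpl. rewrite <- seq_shift, map_map. reflexivity.
Qed.

Lemma sC_ext : forall n F G, (forall k, (k < n)%nat -> F k = G k) -> sC n F = sC n G.
Proof.
  induction n; intros; auto. rewrite !sC_S. rewrite (IHn F G); [|intros; apply H; lia].
  rewrite H by lia. reflexivity.
Qed.

Lemma sC_zero : forall n F, (forall k, (k < n)%nat -> F k = RtoC 0) -> sC n F = RtoC 0.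
Proof.
  induction n; intros; auto. rewrite sC_S, IHn by (intros; apply H; lia).
  rewrite H by lia. ring.
Qed.

Lemma sC_plus : forall n F G, sC n (fun k => Cplus (F k) (G k)) = Cplus (sC n F) (sC n G).
Proof. induction n; intros. - rewrite !sC_0. ring. - rewrite !sC_S, IHn. ring. Qed.

Lemma sC_scal_l : forall n c F, sC n (fun k => Cmult c (F k)) = Cmult c (sC n F).
Proof. induction n; intros. - rewrite !sC_0. ring. - rewrite !sC_S, IHn. ring. Qed.

Lemma sC_scal_r : forall n c F, sC n (fun k => Cmult (F k) c) = Cmult (sC n F) c.
Proof. induction n; intros. - rewrite !sC_0. ring. - rewrite !sC_S, IHn. ring. Qed.

Lemma sC_rev : forall x F, sC (S x) F = sC (S x) (fun y => F (x - y)%nat).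
Proof.
  induction x; intros.
  - reflexivity.
  - rewrite (sC_S (S x) F). rewrite (sC_first (S x) (fun y => F (S x - y)%nat)).
    rewrite (IHx F). replace (S x - 0)%nat with (S x) by lia.
    rewrite (sC_ext (S x) (fun y => F (x - y)%nat) (fun k => F (S x - S k)%nat)).
    + ring.
    + intros. f_equal.
Qed.

Lemma sC_tri : forall x (G : nat -> nat -> C),
  sC (S x) (fun z => sC (S z) (fun u => G u z)) =
  sC (S x) (fun u => sC (S (x - u)) (fun v => G u (u + v)%nat)).
Proof.
  induction x; intros.
  - simpl. unfold sC, csum; simpl. reflexivity.
  - rewrite sC_S, IHx.
    rewrite (sC_S (S x) (fun u => sC (S (S x - u)) (fun v => G u (u + v)%nat))).
    replace (S x - S x)%nat with 0%nat by lia.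
    rewrite (sC_ext (S x) (fun u => sC (S (S x - u)) (fun v => G u (u + v)%nat))
                 (fun u => Cplus (sC (S (x - u)) (fun v => G u (u + v)%nat)) (G u (S x)))).
    + rewrite sC_plus. rewrite (sC_S (S x) (fun u => G u (S x))).
      rewrite (sC_S 0). rewrite sC_0. replace (S x + 0)%nat with (S x) by lia. ring.
    + intros. replace (S x - k)%nat with (S (x - k)) by lia. rewrite sC_S.
      replace (k + S (x - k))%nat with (S x) by lia. reflexivity.
Qed.

Lemma csum_flat_map : forall {A B} (h : B -> C) (k : A -> list B) (l : list A),
  csum (map h (flat_map k l)) = csum (map (fun y => csum (map h (k y))) l).
Proof.
  induction l; simpl; auto. rewrite map_app, csum_app, IHl. reflexivity.
Qed.

Lemma csum_map_plus : forall {A} (F G : A -> C) l,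
  csum (map (fun b => Cplus (F b) (G b)) l) = Cplus (csum (map F l)) (csum (map G l)).
Proof. induction l; simpl; unfold csum in *; simpl. - ring. - rewrite IHl. ring. Qed.

Lemma csum_map_scal : forall {A} c (F : A -> C) l,
  csum (map (fun b => Cmult c (F b)) l) = Cmult c (csum (map F l)).
Proof. induction l; simpl; unfold csum in *; simpl. - ring. - rewrite IHl. ring. Qed.

Definition ser := list nat -> C.
Definition mulS (f g : ser) : ser :=
  fun a => csum (map (fun b => Cmult (f b) (g (idxsub a b))) (subidx a)).
Definition addS (f g : ser) : ser := fun a => Cplus (f a) (g a).
Definition oppS (f : ser) : ser := fun a => Copp (f a).
Definition subS (f g : ser) : ser := fun a => Cminus (f a) (g a).
Definition zeroS : ser := fun _ => RtoC 0.
Definition oneS : ser := fun a => if forallb (fun x => Nat.eqb x 0) a then RtoC 1 else RtoC 0.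
Definition scS (c : C) (f : ser) : ser := fun a => Cmult c (f a).
Definition sec (f : ser) (y : nat) : ser := fun t => f (y :: t).

Lemma idxsub_cons : forall x s y t, idxsub (x :: s) (y :: t) = (x - y)%nat :: idxsub s t.
Proof.
  intros. unfold idxsub. cbn [length]. change (seq 0 (S (length s))) with (0%nat :: seq 1 (length s)).
  rewrite <- seq_shift. rewrite map_cons, map_map. reflexivity.
Qed.

Lemma mulS_nil : forall f g, mulS f g [] = Cmult (f []) (g []).
Proof. intros. unfold mulS. simpl. unfold csum. simpl. change (idxsub [] []) with (@nil nat). ring. Qed.

Lemma mulS_cons : forall f g x s,
  mulS f g (x :: s) = sC (S x) (fun y => mulS (sec f y) (sec g (x - y)) s).
Proof.
  intros. unfold mulS at 1.
  change (subidx (x :: s)) with (flat_map (fun b => map (cons b) (subidx s)) (seq 0 (S x))).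
  rewrite csum_flat_map. unfold sC.
  f_equal. apply map_ext. intro y. rewrite map_map. unfold mulS. f_equal.
  apply map_ext. intro t. rewrite idxsub_cons. reflexivity.
Qed.

Lemma mulS_comm : forall f g, mulS f g = mulS g f.
Proof.
  intros f g. apply functional_extensionality. intro a. revert f g.
  induction a; intros.
  - rewrite !mulS_nil. ring.
  - rewrite !mulS_cons. rewrite (sC_rev a). apply sC_ext. intros.
    rewrite IHa. f_equal. f_equal. lia.
Qed.

Lemma mulS_add_l : forall f g h, mulS (addS f g) h = addS (mulS f h) (mulS g h).
Proof.
  intros. apply functional_extensionality. intro a. unfold mulS, addS.
  rewrite <- csum_map_plus. f_equal. apply map_ext. intros. ring.
Qed.

Lemma mulS_scal_l : forall c f g, mulS (scS c f) g = scS c (mulS f g).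
Proof.
  intros. apply functional_extensionality. intro a. unfold mulS, scS.
  rewrite <- csum_map_scal. f_equal. apply map_ext. intros. ring.
Qed.

Lemma mulS_scal_r : forall c f g, mulS f (scS c g) = scS c (mulS f g).
Proof. intros. rewrite mulS_comm, mulS_scal_l, mulS_comm. reflexivity. Qed.

Lemma mulS_zero_l : forall g, mulS zeroS g = zeroS.
Proof.
  intros. apply functional_extensionality. intro a. unfold mulS, zeroS.
  induction (subidx a); simpl; unfold csum in *; simpl. reflexivity.
  rewrite IHl. ring.
Qed.

Lemma mulS_sum_l : forall n (F : nat -> ser) h,
  mulS (fun t => sC n (fun u => F u t)) h = fun a => sC n (fun u => mulS (F u) h a).
Proof.
  induction n; intros.
  - apply functional_extensionality. intro a.
    change (fun t : list nat => sC 0 (fun u => F u t)) with zeroS.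
    rewrite mulS_zero_l. reflexivity.
  - apply functional_extensionality. intro a.
    replace (fun t => sC (S n) (fun u => F u t)) with
        (addS (fun t => sC n (fun u => F u t)) (F n)).
    + rewrite mulS_add_l. unfold addS. rewrite IHn. rewrite sC_S. reflexivity.
    + apply functional_extensionality. intro t. unfold addS. rewrite sC_S. reflexivity.
Qed.

Lemma sec_mulS : forall f g z,
  sec (mulS f g) z = fun t => sC (S z) (fun u => mulS (sec f u) (sec g (z - u)) t).
Proof. intros. apply functional_extensionality. intro t. unfold sec at 1. apply mulS_cons. Qed.

Lemma mulS_assoc : forall f g h, mulS f (mulS g h) = mulS (mulS f g) h.
Proof.
  intros f g h. apply functional_extensionality. intro a. revert f g h.
  induction a as [|x s IHa]; intros.
  - rewrite !mulS_nil. ring.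
  - rewrite !mulS_cons.
    rewrite (sC_ext (S x) (fun y => mulS (sec (mulS f g) y) (sec h (x - y)) s)
      (fun y => sC (S y) (fun u => mulS (mulS (sec f u) (sec g (y - u))) (sec h (x - y)) s))).
    2:{ intros. rewrite sec_mulS. rewrite mulS_sum_l. reflexivity. }
    rewrite (sC_tri x (fun u y => mulS (mulS (sec f u) (sec g (y - u))) (sec h (x - y)) s)).
    apply sC_ext. intros u Hu.
    rewrite mulS_comm. rewrite sec_mulS. rewrite mulS_sum_l.
    apply sC_ext. intros v Hv.
    replace (u + v - u)%nat with v by lia. replace (x - (u + v))%nat with (x - u - v)%nat by lia.
    change (fun t => mulS (sec g v) (sec h (x - u - v)) t) with (mulS (sec g v) (sec h (x - u - v))).
    rewrite (mulS_comm _ (sec f u)). apply IHa.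
Qed.

Lemma sec_oneS_0 : sec oneS 0 = oneS.
Proof. apply functional_extensionality. intro t. reflexivity. Qed.
Lemma sec_oneS_S : forall y, sec oneS (S y) = zeroS.
Proof. intros. apply functional_extensionality. intro t. reflexivity. Qed.

Lemma mulS_one_l : forall f, mulS oneS f = f.
Proof.
  intros f. apply functional_extensionality. intro a. revert f.
  induction a as [|x s IHa]; intros.
  - rewrite mulS_nil. unfold oneS. simpl. ring.
  - rewrite mulS_cons, sC_first. rewrite sec_oneS_0, IHa.
    rewrite sC_zero. + replace (x - 0)%nat with x by lia. unfold sec. ring.
    + intros. rewrite sec_oneS_S, mulS_zero_l. reflexivity.
Qed.

Lemma ser_rt : ring_theory zeroS oneS addS mulS subS oppS (@eq ser).
Proof.
  constructor; intros; try (apply functional_extensionality; intro a; unfold addS, zeroS, subS, oppS; ring).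
  - apply mulS_one_l.
  - apply mulS_comm.
  - apply mulS_assoc.
  - apply mulS_add_l.
Qed.
Add Ring serR : ser_rt.

Definition Pf (phi : nat -> nat -> C) : ser :=
  fun a => cprod (map (fun j => phi j (nth j a 0%nat)) (seq 0 (length a))).

Lemma Pf_nil : forall phi, Pf phi [] = RtoC 1.
Proof. reflexivity. Qed.

Lemma Pf_cons : forall phi x s, Pf phi (x :: s) = Cmult (phi 0%nat x) (Pf (fun j => phi (S j)) s).
Proof.
  intros. unfold Pf. cbn [length]. change (seq 0 (S (length s))) with (0%nat :: seq 1 (length s)).
  rewrite <- seq_shift. rewrite map_cons, map_map. reflexivity.
Qed.

Lemma sec_Pf : forall phi y, sec (Pf phi) y = scS (phi 0%nat y) (Pf (fun j => phi (S j))).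
Proof. intros. apply functional_extensionality. intro t. unfold sec, scS. apply Pf_cons. Qed.

Lemma Pf_mul : forall phi psi,
  mulS (Pf phi) (Pf psi) = Pf (fun j k => sC (S k) (fun i => Cmult (phi j i) (psi j (k - i)%nat))).
Proof.
  intros phi psi. apply functional_extensionality. intro a. revert phi psi.
  induction a as [|x s IHa]; intros.
  - rewrite mulS_nil. rewrite !Pf_nil. ring.
  - rewrite mulS_cons, Pf_cons. rewrite <- sC_scal_r. apply sC_ext. intros y Hy.
    rewrite !sec_Pf, mulS_scal_l, mulS_scal_r. unfold scS. rewrite IHa. ring.
Qed.

Lemma cprod_zero : forall (F : nat -> C) l j, In j l -> F j = RtoC 0 -> cprod (map F l) = RtoC 0.
Proof.
  induction l; intros; simpl in *. contradiction.
  unfold cprod in *. simpl. destruct H. subst. rewrite H0. ring.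
  erewrite IHl; eauto. ring.
Qed.

Definition ediv (w : C) (k : nat) : C := Cdiv (cpow w k) (RtoC (INR (fact k))).

Definition phiL (L : lin) (j k : nat) : C :=
  if Nat.eqb j 1 then (if Nat.eqb k 0 then RtoC 1 else RtoC 0)
  else ediv (Cmult two_pi_i (L j)) k.

Definition EL (z : C) (L : lin) : ser := fun a => fps_explin L a z.

Lemma EL_form : forall z L,
  EL z L = scS (cexp (Cmult two_pi_i (Cmult (L 1%nat) z))) (Pf (phiL L)).
Proof.
  intros. apply functional_extensionality. intro a. unfold EL, fps_explin, scS, Pf.
  destruct (Nat.eqb (nth 1 a 0%nat) 0) eqn:H.
  - f_equal. f_equal. apply map_ext. intro j. unfold phiL.
    destruct (Nat.eqb j 1) eqn:Hj; auto. apply Nat.eqb_eq in Hj; subst. rewrite H. reflexivity.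
  - rewrite (cprod_zero _ _ 1%nat). ring.
    + apply in_seq. split. lia. destruct (Nat.lt_ge_cases 1 (length a)); auto.
      rewrite nth_overflow in H by auto. discriminate.
    + unfold phiL. simpl. rewrite H. reflexivity.
Qed.

Lemma cexp_plus : forall a b, cexp (Cplus a b) = Cmult (cexp a) (cexp b).
Proof.
  intros [a1 a2] [b1 b2]. unfold cexp. simpl.
  apply injective_projections; simpl; rewrite exp_plus, ?cos_plus, ?sin_plus; ring.
Qed.

Lemma INR_fact_C : forall k, RtoC (INR (fact k)) <> RtoC 0.
Proof. intros k H. apply RtoC_inj in H. apply (INR_fact_neq_0 k). auto. Qed.

Lemma INR_S_C : forall k, RtoC (INR (S k)) <> RtoC 0.
Proof. intros k H. apply RtoC_inj in H. apply (not_0_INR (S k)); auto. Qed.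

Lemma ediv_S : forall w m, Cmult (RtoC (INR (S m))) (ediv w (S m)) = Cmult w (ediv w m).
Proof.
  intros. unfold ediv. simpl cpow. rewrite fact_simpl, mult_INR, RtoC_mult.
  field. split; [apply INR_fact_C | apply INR_S_C].
Qed.

Lemma ediv_0 : forall w, ediv w 0 = RtoC 1.
Proof. intros. unfold ediv. simpl. field. Qed.

Lemma Cmult_eq_reg_l : forall c a b, Cmult c a = Cmult c b -> c <> RtoC 0 -> a = b.
Proof.
  intros. replace a with (Cmult (Cinv c) (Cmult c a)) by (field; auto).
  rewrite H. field; auto.
Qed.

Lemma expbin : forall u v k,
  sC (S k) (fun i => Cmult (ediv u i) (ediv v (k - i)%nat)) = ediv (Cplus u v) k.
Proof.
  intros u v k. induction k.
  - rewrite sC_S, sC_0. simpl. rewrite !ediv_0. ring.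
  - apply (Cmult_eq_reg_l (RtoC (INR (S k)))); [| apply INR_S_C].
    rewrite ediv_S, <- IHk.
    rewrite <- sC_scal_l.
    rewrite (sC_ext (S (S k)) _ (fun i => Cplus
        (Cmult (RtoC (INR i)) (Cmult (ediv u i) (ediv v (S k - i))))
        (Cmult (RtoC (INR (S k - i))) (Cmult (ediv u i) (ediv v (S k - i)))))).
    2:{ intros i Hi. rewrite <- Cmult_plus_distr_r. f_equal.
        rewrite <- RtoC_plus, <- plus_INR. f_equal. f_equal. lia. }
    rewrite sC_plus. rewrite sC_first, (sC_S (S k) (fun i => Cmult (RtoC (INR (S k - i))) _)).
    replace (S k - S k)%nat with 0%nat by lia. simpl INR at 1. simpl INR at 3.
    rewrite (sC_ext (S k) (fun k0 => Cmult (RtoC (INR (S k0))) (Cmult (ediv u (S k0)) (ediv v (S k - S k0))))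
                (fun i => Cmult u (Cmult (ediv u i) (ediv v (k - i))))).
    2:{ intros i Hi. replace (S k - S i)%nat with (k - i)%nat by lia.
        rewrite Cmult_assoc, ediv_S. ring. }
    rewrite (sC_ext (S k) (fun i => Cmult (RtoC (INR (S k - i))) (Cmult (ediv u i) (ediv v (S k - i))))
                (fun i => Cmult v (Cmult (ediv u i) (ediv v (k - i))))).
    2:{ intros i Hi. replace (S k - i)%nat with (S (k - i)) by lia.
        rewrite (Cmult_comm (ediv u i)), Cmult_assoc, ediv_S. ring. }
    rewrite !sC_scal_l. ring.
Qed.

Lemma Pf_ext : forall phi psi, (forall j k, phi j k = psi j k) -> Pf phi = Pf psi.
Proof.
  intros. f_equal. apply functional_extensionality. intro j. apply functional_extensionality. auto.
Qed.

Lemma EL_mul : forall z L1 L2, mulS (EL z L1) (EL z L2) = EL z (fun i => Cplus (L1 i) (L2 i)).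
Proof.
  intros. rewrite !EL_form, mulS_scal_l, mulS_scal_r, Pf_mul.
  apply functional_extensionality. intro a. unfold scS.
  rewrite (Pf_ext _ (phiL (fun i => Cplus (L1 i) (L2 i)))).
  - rewrite Cmult_assoc. f_equal. rewrite <- cexp_plus. f_equal. ring.
  - intros j k. unfold phiL. destruct (Nat.eqb j 1).
    + rewrite sC_first. rewrite sC_zero.
      * destruct k; simpl; ring.
      * intros. simpl. ring.
    + rewrite expbin. f_equal. ring.
Qed.

Lemma Pf_one : Pf (fun _ k => if Nat.eqb k 0 then RtoC 1 else RtoC 0) = oneS.
Proof.
  apply functional_extensionality. intro a. induction a as [|x s IH].
  - reflexivity.
  - rewrite Pf_cons. rewrite IH. unfold oneS. simpl. destruct x; simpl; ring.
Qed.

Lemma EL_zero : forall z, EL z (fun _ => RtoC 0) = oneS.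
Proof.
  intros. rewrite EL_form. rewrite <- Pf_one.
  apply functional_extensionality. intro a. unfold scS.
  replace (cexp (Cmult two_pi_i (Cmult (RtoC 0) z))) with (RtoC 1).
  - rewrite Cmult_1_l. f_equal. apply functional_extensionality. intro j. apply functional_extensionality. intro k. unfold phiL.
    destruct (Nat.eqb j 1); auto. destruct k.
    + apply ediv_0.
    + unfold ediv. change (cpow (Cmult two_pi_i (RtoC 0)) (S k)) with (Cmult (Cmult two_pi_i (RtoC 0)) (cpow (Cmult two_pi_i (RtoC 0)) k)).
      replace (Nat.eqb (S k) 0) with false by reflexivity. field. apply (INR_fact_C (S k)).
  - rewrite Cmult_0_l, Cmult_0_r. unfold cexp. simpl. rewrite exp_0, cos_0, sin_0.
    apply injective_projections; simpl; ring.
Qed.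

Definition atz (z : C) (F : fps) : ser := fun a => F a z.

Lemma atz_mul : forall z f g, atz z (fps_mul f g) = mulS (atz z f) (atz z g).
Proof. reflexivity. Qed.
Lemma atz_add : forall z f g, atz z (fps_add f g) = addS (atz z f) (atz z g).
Proof. reflexivity. Qed.
Lemma atz_one : forall z, atz z fps_one = oneS.
Proof. reflexivity. Qed.
Lemma atz_explin : forall z L, atz z (fps_explin L) = EL z L.
Proof. reflexivity. Qed.

Lemma lincomb_tvar : forall c, lincomb c tvar = c.
Proof.
  intros. apply functional_extensionality. intro i. unfold lincomb.
  change (csum (map (fun k => Cmult (c k) (tvar k i)) (seq 0 (S i)))) with
    (sC (S i) (fun k => Cmult (c k) (tvar k i))).
  rewrite sC_S, sC_zero.
  - unfold tvar. rewrite Nat.eqb_refl. ring.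
  - intros. unfold tvar. destruct (Nat.eqb_spec k i). lia. ring.
Qed.

Lemma sC_RtoC : forall i f, sC (S i) (fun k => RtoC (f k)) = RtoC (sum_f_R0 f i).
Proof.
  induction i; intros.
  - rewrite sC_S, sC_0. simpl. ring.
  - rewrite sC_S, IHi. simpl. rewrite RtoC_plus. reflexivity.
Qed.

Lemma lincomb_tT : forall c i,
  lincomb c tT i = sC (S i) (fun k => Cmult (c k) (RtoC ((-1) ^ (i - k) * Binomial.C i k))).
Proof.
  intros. unfold lincomb. change (csum (map ?F (seq 0 (S i)))) with (sC (S i) F).
  apply sC_ext. intros k Hk. unfold tT. replace (Nat.leb k i) with true.
  - rewrite <- pascal_step1 by lia. reflexivity.
  - symmetry. apply Nat.leb_le. lia.
Qed.

Lemma lincomb_plus_tT : forall n i,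
  lincomb (c_plus n) tT i = RtoC ((INR n + / 2 - 1) ^ i).
Proof.
  intros. rewrite lincomb_tT. unfold c_plus.
  rewrite (sC_ext _ _ (fun k => RtoC ((Binomial.C i k * (INR n + /2) ^ k * (-1) ^ (i - k))))).
  - rewrite sC_RtoC. f_equal. replace (INR n + /2 - 1) with ((INR n + /2) + -1) by ring.
    rewrite binomial. reflexivity.
  - intros. rewrite <- RtoC_mult. f_equal. ring.
Qed.

Lemma sum_scal_l : forall c f n, sum_f_R0 (fun k => c * f k) n = c * sum_f_R0 f n.
Proof. induction n; simpl; auto. rewrite IHn. ring. Qed.

Lemma lincomb_minus_tT : forall n, lincomb (c_minus n) tT = c_minus (S n).
Proof.
  intros. apply functional_extensionality. intro i. rewrite lincomb_tT. unfold c_minus.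
  rewrite (sC_ext _ _ (fun k => RtoC ((-1) ^ (S i) * (Binomial.C i k * (INR n + /2) ^ k * 1 ^ (i - k))))).
  - rewrite sC_RtoC. f_equal. rewrite sum_scal_l. rewrite <- binomial.
    rewrite S_INR. f_equal. f_equal. ring.
  - intros k Hk. rewrite <- RtoC_mult. f_equal.
    replace ((-1) ^ (S i)) with ((-1) ^ (S k) * (-1) ^ (i - k)).
    + rewrite pow1. ring.
    + rewrite <- pow_add. f_equal. lia.
Qed.

Lemma lincomb_plusS_tT : forall m, lincomb (c_plus (S m)) tT = c_plus m.
Proof.
  intros. apply functional_extensionality. intro i. rewrite lincomb_plus_tT. unfold c_plus.
  rewrite S_INR. f_equal. f_equal. ring.
Qed.

Lemma lincomb_plus0_tT : lincomb (c_plus 0) tT = fun i => Copp (c_minus 0 i).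
Proof.
  apply functional_extensionality. intro i. rewrite lincomb_plus_tT. unfold c_minus.
  rewrite <- RtoC_opp. f_equal. simpl INR.
  replace (0 + /2 - 1) with ((-1) * /2) by field. rewrite Rpow_mult_distr.
  rewrite Rplus_0_l. simpl pow. ring.
Qed.


Definition sR (n : nat) (F : nat -> R) : R := fold_right Rplus 0 (map F (seq 0 n)).

Lemma fr_app : forall l1 l2, fold_right Rplus 0 (l1 ++ l2) = fold_right Rplus 0 l1 + fold_right Rplus 0 l2.
Proof. induction l1; intros; simpl. ring. rewrite IHl1. ring. Qed.

Lemma sR_0 : forall F, sR 0 F = 0.
Proof. reflexivity. Qed.
Lemma sR_S : forall n F, sR (S n) F = sR n F + F n.
Proof. intros. unfold sR. rewrite seq_S, map_app, fr_app. simpl. ring. Qed.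
Lemma sR_first : forall n F, sR (S n) F = F 0%nat + sR n (fun k => F (S k)).
Proof. intros. unfold sR. simpl. rewrite <- seq_shift, map_map. reflexivity. Qed.
Lemma sR_ext : forall n F G, (forall k, (k < n)%nat -> F k = G k) -> sR n F = sR n G.
Proof.
  induction n; intros; auto. rewrite !sR_S. rewrite (IHn F G) by (intros; apply H; lia).
  rewrite H by lia. reflexivity.
Qed.
Lemma sR_le : forall n F G, (forall k, (k < n)%nat -> F k <= G k) -> sR n F <= sR n G.
Proof.
  induction n; intros. rewrite !sR_0; lra. rewrite !sR_S.
  apply Rplus_le_compat. apply IHn; intros; apply H; lia. apply H; lia.
Qed.
Lemma sR_nonneg : forall n F, (forall k, (k < n)%nat -> 0 <= F k) -> 0 <= sR n F.
Proof.
  induction n; intros. rewrite sR_0; lra. rewrite sR_S.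
  assert (0 <= sR n F) by (apply IHn; intros; apply H; lia).
  assert (0 <= F n) by (apply H; lia). lra.
Qed.
Lemma sR_scal_l : forall n c F, sR n (fun k => c * F k) = c * sR n F.
Proof. induction n; intros. rewrite !sR_0; ring. rewrite !sR_S, IHn. ring. Qed.
Lemma sR_scal_r : forall n c F, sR n (fun k => F k * c) = sR n F * c.
Proof. induction n; intros. rewrite !sR_0; ring. rewrite !sR_S, IHn. ring. Qed.
Lemma sR_plus : forall n F G, sR n (fun k => F k + G k) = sR n F + sR n G.
Proof. induction n; intros. rewrite !sR_0; ring. rewrite !sR_S, IHn. ring. Qed.
Lemma sR_mono_n : forall n m F, (n <= m)%nat -> (forall k, 0 <= F k) -> sR n F <= sR m F.
Proof.
  intros. induction H. lra. rewrite sR_S. specialize (H0 m). lra.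
Qed.
Lemma sR_term : forall n F k, (k < n)%nat -> (forall k, 0 <= F k) -> F k <= sR n F.
Proof.
  intros. apply Rle_trans with (sR (S k) F); [| apply sR_mono_n; auto]. rewrite sR_S.
  pose proof (sR_nonneg k F (fun j _ => H0 j)). lra.
Qed.

Lemma sR_tri : forall x (G : nat -> nat -> R),
  sR (S x) (fun z => sR (S z) (fun u => G u z)) =
  sR (S x) (fun u => sR (S (x - u)) (fun v => G u (u + v)%nat)).
Proof.
  induction x; intros.
  - reflexivity.
  - rewrite sR_S, IHx.
    rewrite (sR_S (S x) (fun u => sR (S (S x - u)) (fun v => G u (u + v)%nat))).
    replace (S x - S x)%nat with 0%nat by lia.
    rewrite (sR_ext (S x) (fun u => sR (S (S x - u)) (fun v => G u (u + v)%nat))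
                 (fun u => sR (S (x - u)) (fun v => G u (u + v)%nat) + G u (S x))).
    + rewrite sR_plus. rewrite (sR_S (S x) (fun u => G u (S x))).
      rewrite (sR_S 0), sR_0. replace (S x + 0)%nat with (S x) by lia. ring.
    + intros. replace (S x - k)%nat with (S (x - k)) by lia. rewrite sR_S.
      replace (k + S (x - k))%nat with (S x) by lia. reflexivity.
Qed.

Lemma fr_flat_map : forall {A B} (h : B -> R) (k : A -> list B) (l : list A),
  fold_right Rplus 0 (map h (flat_map k l)) = fold_right Rplus 0 (map (fun y => fold_right Rplus 0 (map h (k y))) l).
Proof. induction l; simpl; auto. rewrite map_app, fr_app, IHl. reflexivity. Qed.

Definition nrm (a : list nat) (f : ser) : R := fold_right Rplus 0 (map (fun b => Cmod (f b)) (subidx a)).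

Lemma nrm_nil : forall f, nrm [] f = Cmod (f []).
Proof. intros. unfold nrm. simpl. ring. Qed.

Lemma nrm_cons : forall x s f, nrm (x :: s) f = sR (S x) (fun y => nrm s (sec f y)).
Proof.
  intros. unfold nrm at 1.
  change (subidx (x :: s)) with (flat_map (fun b => map (cons b) (subidx s)) (seq 0 (S x))).
  rewrite fr_flat_map. unfold sR. f_equal. apply map_ext. intro y. rewrite map_map. reflexivity.
Qed.

Lemma nrm_nonneg : forall a f, 0 <= nrm a f.
Proof.
  intros. unfold nrm. induction (subidx a); simpl. lra. pose proof (Cmod_ge_0 (f a0)). lra.
Qed.

Lemma coef_le_nrm : forall a f, Cmod (f a) <= nrm a f.
Proof.
  induction a as [|x s IH]; intros.
  - rewrite nrm_nil. lra.
  - rewrite nrm_cons. eapply Rle_trans; [| apply (sR_term (S x) (fun y => nrm s (sec f y)) x)].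
    + apply (IH (sec f x)).
    + lia.
    + intros; apply nrm_nonneg.
Qed.

Lemma nrm_add : forall a f g, nrm a (addS f g) <= nrm a f + nrm a g.
Proof.
  intros. unfold nrm, addS. induction (subidx a); simpl. lra.
  pose proof (Cmod_triangle (f a0) (g a0)). lra.
Qed.

Lemma nrm_opp : forall a f, nrm a (oppS f) = nrm a f.
Proof.
  intros. unfold nrm, oppS. induction (subidx a); simpl. lra.
  rewrite IHl. f_equal. apply Cmod_opp.
Qed.

Lemma nrm_scal : forall a c f, nrm a (scS c f) = Cmod c * nrm a f.
Proof.
  intros. unfold nrm, scS. induction (subidx a); simpl. ring.
  rewrite IHl, Cmod_mult. ring.
Qed.

Lemma nrm_zero : forall a, nrm a zeroS = 0.
Proof. intros. unfold nrm, zeroS. induction (subidx a); simpl. ring. rewrite IHl, Cmod_0. ring. Qed.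

Lemma nrm_sum : forall s n (F : nat -> ser),
  nrm s (fun t => sC n (fun u => F u t)) <= sR n (fun u => nrm s (F u)).
Proof.
  induction n; intros.
  - rewrite sR_0. change (fun t => sC 0 (fun u => F u t)) with zeroS. rewrite nrm_zero. lra.
  - rewrite sR_S. replace (fun t => sC (S n) (fun u => F u t)) with (addS (fun t => sC n (fun u => F u t)) (F n)).
    + eapply Rle_trans. apply nrm_add. specialize (IHn F). lra.
    + apply functional_extensionality. intro t. unfold addS. rewrite sC_S. reflexivity.
Qed.

Lemma nrm_mul : forall a f g, nrm a (mulS f g) <= nrm a f * nrm a g.
Proof.
  induction a as [|x s IH]; intros.
  - rewrite !nrm_nil, mulS_nil, Cmod_mult. lra.
  - rewrite !nrm_cons.
    rewrite (sR_ext (S x) (fun y => nrm s (sec (mulS f g) y))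
       (fun z => nrm s (fun t => sC (S z) (fun u => mulS (sec f u) (sec g (z - u)) t)))).
    2:{ intros. rewrite sec_mulS. reflexivity. }
    eapply Rle_trans. apply sR_le. intros. apply nrm_sum.
    eapply Rle_trans. apply sR_le. intros. apply sR_le. intros. apply IH.
    rewrite (sR_tri x (fun u z => nrm s (sec f u) * nrm s (sec g (z - u)))).
    rewrite <- sR_scal_r. apply sR_le. intros u Hu.
    rewrite <- sR_scal_l. 
    rewrite (sR_ext _ _ (fun v => nrm s (sec f u) * nrm s (sec g v))).
    2:{ intros. f_equal. f_equal. f_equal. lia. }
    rewrite sR_scal_l, sR_scal_l. apply Rmult_le_compat_l. apply nrm_nonneg.
    apply sR_mono_n. lia. intros; apply nrm_nonneg.
Qed.

Lemma sR_rev : forall x F, sR (S x) F = sR (S x) (fun y => F (x - y)%nat).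
Proof.
  induction x; intros.
  - reflexivity.
  - rewrite (sR_S (S x) F). rewrite (sR_first (S x) (fun y => F (S x - y)%nat)).
    rewrite (IHx F). replace (S x - 0)%nat with (S x) by lia.
    rewrite (sR_ext (S x) (fun y => F (x - y)%nat) (fun k => F (S x - S k)%nat)).
    + ring.
    + intros. f_equal.
Qed.

Lemma sR_zero : forall n F, (forall k, (k < n)%nat -> F k = 0) -> sR n F = 0.
Proof.
  induction n; intros; auto. rewrite sR_S, IHn by (intros; apply H; lia). rewrite H by lia. ring.
Qed.

Lemma sR_sum_f : forall n F, sR (S n) F = sum_f_R0 F n.
Proof. induction n; intros. rewrite sR_S, sR_0. simpl. ring. rewrite sR_S, IHn. reflexivity. Qed.

Definition sq := nat -> R.
Definition cv (f g : sq) : sq := fun n => sR (S n) (fun k => f k * g (n - k)%nat).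
Definition ad (f g : sq) : sq := fun n => f n + g n.
Definition op (f : sq) : sq := fun n => - f n.
Definition sb (f g : sq) : sq := fun n => f n - g n.
Definition z0 : sq := fun _ => 0.
Definition dl : sq := fun n => if Nat.eqb n 0 then 1 else 0.

Lemma cv_comm : forall f g, cv f g = cv g f.
Proof.
  intros. apply functional_extensionality. intro n. unfold cv. rewrite sR_rev.
  apply sR_ext. intros. replace (n - (n - k))%nat with k by lia. ring.
Qed.

Lemma cv_assoc : forall f g h, cv f (cv g h) = cv (cv f g) h.
Proof.
  intros. apply functional_extensionality. intro n. unfold cv.
  rewrite (sR_ext (S n) (fun k => sR (S k) (fun k0 => f k0 * g (k - k0)%nat) * h (n - k)%nat)
     (fun k => sR (S k) (fun u => f u * g (k - u)%nat * h (n - k)%nat))).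
  2:{ intros. rewrite <- sR_scal_r. reflexivity. }
  rewrite (sR_tri n (fun u k => f u * g (k - u)%nat * h (n - k)%nat)).
  apply sR_ext. intros u Hu. rewrite <- sR_scal_l. apply sR_ext. intros v Hv.
  replace (u + v - u)%nat with v by lia. replace (n - (u + v))%nat with (n - u - v)%nat by lia. ring.
Qed.

Lemma cv_dl : forall f, cv dl f = f.
Proof.
  intros. apply functional_extensionality. intro n. unfold cv. rewrite sR_first.
  rewrite sR_zero. unfold dl. simpl. replace (n - 0)%nat with n by lia. ring.
  intros. unfold dl. simpl. ring.
Qed.

Lemma sq_rt : ring_theory z0 dl ad cv sb op (@eq sq).
Proof.
  constructor; intros; try (apply functional_extensionality; intro n; unfold ad, z0, sb, op; ring).
  - apply cv_dl.
  - apply cv_comm.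
  - apply cv_assoc.
  - apply functional_extensionality. intro n. unfold cv, ad. rewrite <- sR_plus. apply sR_ext. intros. ring.
Qed.
Add Ring sqR : sq_rt.

Definition sg (f : sq) : sq := fun n => (-1) ^ n * f n.
Definition rh (f : sq) : sq := fun n => (/2) ^ n * f n.

Lemma sg_cv : forall f g, sg (cv f g) = cv (sg f) (sg g).
Proof.
  intros. apply functional_extensionality. intro n. unfold sg, cv. rewrite <- sR_scal_l.
  apply sR_ext. intros. replace ((-1) ^ n) with ((-1) ^ k * (-1) ^ (n - k)).
  ring. rewrite <- pow_add. f_equal. lia.
Qed.
Lemma rh_cv : forall f g, rh (cv f g) = cv (rh f) (rh g).
Proof.
  intros. apply functional_extensionality. intro n. unfold rh, cv. rewrite <- sR_scal_l.
  apply sR_ext. intros. replace ((/2) ^ n) with ((/2) ^ k * (/2) ^ (n - k)).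
  ring. rewrite <- pow_add. f_equal. lia.
Qed.
Lemma sg_dl : sg dl = dl.
Proof. apply functional_extensionality. intros [|n]; unfold sg, dl; simpl; ring. Qed.
Lemma rh_ad : forall f g, rh (ad f g) = ad (rh f) (rh g).
Proof. intros. apply functional_extensionality. intro n. unfold rh, ad. ring. Qed.

Definition eone : sq := fun n => if Nat.eqb n 1 then 1 else 0.

Lemma cv_e1_S : forall X n, cv eone X (S n) = X n.
Proof.
  intros. unfold cv. rewrite sR_first, sR_first. rewrite sR_zero.
  unfold eone. simpl. replace (n - 0)%nat with n by lia. ring.
  intros. unfold eone. simpl. ring.
Qed.
Lemma cv_e1_0 : forall X, cv eone X 0%nat = 0.
Proof. intros. unfold cv. rewrite sR_S, sR_0. unfold eone. simpl. ring. Qed.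

Lemma e1_cancel : forall X Y, cv eone X = cv eone Y -> forall n, X n = Y n.
Proof. intros. rewrite <- (cv_e1_S X n), <- (cv_e1_S Y n), H. reflexivity. Qed.

Definition exq (x : R) : sq := fun k => x ^ k / INR (fact k).

Lemma ex_conv : forall x y, cv (exq x) (exq y) = exq (x + y).
Proof.
  intros. apply functional_extensionality. intro n. unfold cv, exq. rewrite sR_sum_f, binomial.
  unfold Rdiv. rewrite (Rmult_comm _ (/ _)), <- sum_scal_l. apply sum_eq. intros k Hk.
  unfold Binomial.C. pose proof (INR_fact_neq_0 k). pose proof (INR_fact_neq_0 (n - k)).
  pose proof (INR_fact_neq_0 n). field. auto.
Qed.

Lemma bern_len : forall n, length (bern_upto n) = S n.
Proof. induction n. reflexivity. simpl bern_upto. rewrite length_app, IHn. simpl. lia. Qed.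

Lemma bern_prefix : forall n k, (k <= n)%nat -> nth k (bern_upto n) 0 = bernoulli k.
Proof.
  induction n; intros.
  - assert (k = 0%nat) by lia. subst. reflexivity.
  - destruct (Nat.eq_dec k (S n)). subst. reflexivity.
    simpl bern_upto. rewrite app_nth1 by (rewrite bern_len; lia). apply IHn. lia.
Qed.

Lemma bern_S : forall m, bernoulli (S m) =
  - / INR (S (S m)) * sR (S m) (fun k => Binomial.C (S (S m)) k * bernoulli k).
Proof.
  intros. unfold bernoulli at 1.
  assert (E : bern_upto (S m) = bern_upto m ++ [ - / INR (S (S m)) * fold_right Rplus 0
     (map (fun k => Binomial.C (S (S m)) k * nth k (bern_upto m) 0) (seq 0 (S m)))]) by reflexivity.
  rewrite E. rewrite app_nth2 by (rewrite bern_len; lia). rewrite bern_len, Nat.sub_diag.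
  change (nth 0 [?x] 0) with x.
  f_equal. unfold sR. f_equal. apply map_ext_in. intros k Hk. apply in_seq in Hk.
  rewrite bern_prefix by lia. reflexivity.
Qed.

Lemma binom_S_n : forall n, Binomial.C (S n) n = INR (S n).
Proof.
  intros. unfold Binomial.C. replace (S n - n)%nat with 1%nat by lia.
  rewrite fact_simpl, mult_INR. simpl (fact 1). pose proof (INR_fact_neq_0 n).
  change (INR 1) with 1. set (s := INR (S n)). set (f := INR (fact n)) in *. field. auto.
Qed.

Lemma bern_rec : forall m, sR (S (S m)) (fun k => Binomial.C (S (S m)) k * bernoulli k) = 0.
Proof.
  intros. rewrite sR_S, binom_S_n, bern_S. pose proof (not_0_INR (S (S m)) ltac:(lia)).
  field. auto.
Qed.

Definition one1 : sq := exq 1.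
Definition sgone : sq := exq (-1).
Definition two : sq := exq 2.
Definition U : sq := fun n => / INR (fact (S n)).
Definition Bs : sq := fun n => bernoulli n / INR (fact n).

Lemma fact_S_minus : forall n k, (k <= n)%nat -> fact (S n - k) = fact (S (n - k)).
Proof. intros. f_equal. lia. Qed.

Lemma F1 : cv Bs U = dl.
Proof.
  apply functional_extensionality. intro n. destruct n.
  - unfold cv, Bs, U, dl. rewrite sR_S, sR_0. simpl. replace (bernoulli 0) with 1 by reflexivity. field.
  - unfold cv, dl. simpl Nat.eqb.
    rewrite (sR_ext _ _ (fun k => / INR (fact (S (S n))) * (Binomial.C (S (S n)) k * bernoulli k))).
    + rewrite sR_scal_l, bern_rec. ring.
    + intros k Hk. unfold Bs, U, Binomial.C. rewrite <- fact_S_minus by lia.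
      pose proof (INR_fact_neq_0 k). pose proof (INR_fact_neq_0 (S (S n) - k)).
      pose proof (INR_fact_neq_0 (S (S n))). field. auto.
Qed.

Lemma F3 : cv sgone U = sg U.
Proof.
  apply functional_extensionality. intro n.
  assert (H : cv sgone one1 (S n) = 0).
  { unfold sgone, one1. rewrite ex_conv. replace (-1 + 1) with 0 by ring. unfold exq.
    rewrite pow_i by lia. unfold Rdiv; ring. }
  unfold cv in H. rewrite sR_S in H. replace (S n - S n)%nat with 0%nat in H by lia.
  unfold cv, sg. rewrite (sR_ext _ _ (fun k => sgone k * one1 (S n - k)%nat)).
  - assert (E : sgone (S n) * one1 0%nat = - ((-1) ^ n * / INR (fact (S n)))).
    { unfold sgone, one1, exq. rewrite pow_O. change (fact 0) with 1%nat. change (INR 1) with 1.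
      rewrite <- tech_pow_Rmult. unfold Rdiv. rewrite Rinv_1. ring. }
    rewrite E in H. unfold U. lra.
  - intros k Hk. unfold U, one1, exq. rewrite pow1, fact_S_minus by lia. unfold Rdiv. ring.
Qed.

Lemma ex_0 : exq 0 = dl.
Proof.
  apply functional_extensionality. intros [|n]; unfold exq, dl; simpl. field. unfold Rdiv. ring.
Qed.

Lemma F4 : cv one1 sgone = dl.
Proof. unfold one1, sgone. rewrite ex_conv. replace (1 + -1) with 0 by ring. apply ex_0. Qed.

Lemma F5 : cv eone U = sb one1 dl.
Proof.
  apply functional_extensionality. intros [|n].
  - rewrite cv_e1_0. unfold sb, one1, exq, dl. simpl. field.
  - rewrite cv_e1_S. unfold sb, one1, exq, dl, U. simpl Nat.eqb. rewrite pow1. unfold Rdiv. ring.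
Qed.

Lemma F6 : cv one1 one1 = two.
Proof. unfold one1, two. rewrite ex_conv. replace (1 + 1) with 2 by ring. reflexivity. Qed.

Lemma F7 : rh two = one1.
Proof.
  apply functional_extensionality. intro n. unfold rh, two, one1, exq.
  rewrite pow1. unfold Rdiv. rewrite <- Rmult_assoc, <- Rpow_mult_distr.
  replace (/2 * 2) with 1 by field. rewrite pow1. ring.
Qed.

Lemma A3 : eone = ad (rh eone) (rh eone).
Proof.
  apply functional_extensionality. intros [|[|n]]; unfold ad, rh, eone; simpl; field.
Qed.

Lemma sgone_eq : sgone = sg one1.
Proof.
  apply functional_extensionality. intro n. unfold sgone, sg, one1, exq. rewrite pow1.
  replace (-1) with (-1 * 1) at 1 by ring. rewrite Rpow_mult_distr, pow1. unfold Rdiv; ring.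
Qed.

Lemma G1 : cv (sg Bs) U = one1.
Proof.
  assert (F2 : cv (sg Bs) (sg U) = dl) by (rewrite <- sg_cv, F1; apply sg_dl).
  pose proof F3 as F3'. pose proof F4 as F4'. rewrite sgone_eq in F3', F4'.
  transitivity (cv (cv (sg Bs) U) dl). ring. rewrite <- F4'.
  transitivity (cv (cv (sg Bs) (cv (sg one1) U)) one1). ring.
  rewrite F3', F2. ring.
Qed.

Lemma G2 : ad (sg Bs) (op eone) = Bs.
Proof.
  set (X := ad (sg Bs) (op eone)).
  assert (HX : cv X U = dl).
  { transitivity (sb (cv (sg Bs) U) (cv eone U)). unfold X. ring. rewrite G1, F5. ring. }
  transitivity (cv X dl). ring. rewrite <- F1. transitivity (cv (cv X U) Bs). ring.
  rewrite HX. ring.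
Qed.

Lemma odd_pow : forall n, Nat.odd n = true -> (-1) ^ n = -1.
Proof.
  intros. apply Nat.odd_spec in H. destruct H as [k Hk]. subst.
  rewrite pow_add, pow_mult. replace ((-1) ^ 2) with 1 by ring. rewrite pow1. ring.
Qed.

Lemma bern_odd : forall n, Nat.odd n = true -> n <> 1%nat -> bernoulli n = 0.
Proof.
  intros. assert (H1 := f_equal (fun f => f n) G2). cbv beta in H1.
  unfold ad, sg, op, eone in H1. rewrite odd_pow in H1 by auto.
  replace (Nat.eqb n 1) with false in H1 by (symmetry; apply Nat.eqb_neq; auto).
  unfold Bs in H1. pose proof (INR_fact_neq_0 n).
  assert (E : bernoulli n / INR (fact n) = 0) by lra.
  unfold Rdiv in E. apply Rmult_integral in E. destruct E as [E|E]; auto.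
  exfalso. apply (Rinv_neq_0_compat _ H2). auto.
Qed.

Lemma F5' : one1 = ad dl (cv eone U).
Proof. rewrite F5. apply functional_extensionality. intro. unfold ad, sb. ring. Qed.

Lemma G3 : cv Bs one1 = ad Bs eone.
Proof.
  rewrite F5'. transitivity (ad Bs (cv eone (cv Bs U))). { ring. } rewrite F1, (cv_comm eone dl), cv_dl. reflexivity.
Qed.

Lemma G4 : cv Bs two = ad (ad Bs eone) (cv eone one1).
Proof.
  rewrite <- F6. transitivity (cv (cv Bs one1) one1). ring. rewrite G3.
  transitivity (ad (cv Bs one1) (cv eone one1)). ring. rewrite G3. reflexivity.
Qed.

Lemma A2 : cv (rh Bs) one1 = ad (ad (rh Bs) (rh eone)) (cv (rh eone) (rh one1)).
Proof.
  transitivity (cv (rh Bs) (rh two)). rewrite F7. reflexivity.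
  rewrite <- rh_cv, G4, !rh_ad, rh_cv. reflexivity.
Qed.

Definition Xi : sq := fun n => if Nat.odd n then xi_neg n / INR (fact n) else 0.

Lemma pow_inv2 : forall m, / 2 ^ m = (/ 2) ^ m.
Proof. intros. rewrite pow_inv. reflexivity. Qed.

Lemma H_Xi : cv eone Xi = ad (sb Bs (ad (rh Bs) (rh Bs))) dl.
Proof.
  apply functional_extensionality. intros [|m].
  - rewrite cv_e1_0. unfold ad, sb, rh, Bs, dl. simpl. replace (bernoulli 0) with 1 by reflexivity.
    unfold Rdiv. change (INR 1) with 1. rewrite Rinv_1. ring.
  - rewrite cv_e1_S. unfold ad, sb, rh, Bs, dl, Xi. simpl Nat.eqb.
    replace ((/ 2) ^ S m) with (/ 2 * (/ 2) ^ m) by reflexivity.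
    pose proof (INR_fact_neq_0 m). pose proof (not_0_INR (S m) ltac:(lia)).
    rewrite fact_simpl, mult_INR.
    destruct (Nat.odd m) eqn:Hm.
    + unfold xi_neg, zeta_neg. rewrite pow_inv2. field. auto.
    + destruct m.
      * simpl. field.
      * rewrite bern_odd. field. auto.
        rewrite Nat.odd_succ. rewrite <- Nat.negb_odd, Hm. reflexivity. lia.
Qed.

Lemma Main_conv : cv eone (cv Xi (sb one1 dl)) = cv eone (sb U (rh one1)).
Proof.
  transitivity (cv (cv eone Xi) (sb one1 dl)). ring. rewrite H_Xi.
  transitivity (ad (ad (sb (cv Bs one1) Bs) (op (ad (cv (rh Bs) one1) (cv (rh Bs) one1))))
                   (ad (ad (rh Bs) (rh Bs)) (sb one1 dl))). ring.
  rewrite G3, A2.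
  transitivity (sb (cv eone U) (cv eone (rh one1))). 2: ring.
  rewrite F5.
  set (r := rh eone). assert (A3' : eone = ad r r) by (unfold r; apply A3).
  rewrite A3'. ring.
Qed.

Lemma Xi_identity : forall i,
  sR i (fun k => (if Nat.odd k then xi_neg k else 0) * Binomial.C i k) = / INR (S i) - (/ 2) ^ i.
Proof.
  intros i. assert (H := e1_cancel _ _ Main_conv i).
  unfold cv, sb, U, rh, one1, exq, dl in H. rewrite sR_S in H.
  rewrite Nat.sub_diag in H. simpl (Nat.eqb 0 0) in H. simpl (1 ^ 0) in H.
  change (fact 0) with 1%nat in H. change (INR 1) with 1 in H.
  rewrite (sR_ext i _ (fun k => Xi k * / INR (fact (i - k)))) in H.
  2:{ intros k Hk. replace (Nat.eqb (i - k) 0) with false by (symmetry; apply Nat.eqb_neq; lia).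
      rewrite pow1. unfold Rdiv. ring. }
  rewrite pow1 in H.
  pose proof (INR_fact_neq_0 i) as Fi.
  assert (E : sR i (fun k => Xi k * / INR (fact (i - k))) = / INR (fact (S i)) - (/ 2) ^ i * (1 / INR (fact i))).
  { rewrite <- H. unfold Rdiv. rewrite Rinv_1. ring. }
  apply (Rmult_eq_compat_l (INR (fact i))) in E.
  rewrite <- sR_scal_l in E.
  replace (INR (fact i) * (/ INR (fact (S i)) - (/ 2) ^ i * (1 / INR (fact i)))) with
    (/ INR (S i) - (/ 2) ^ i) in E.
  2:{ rewrite fact_simpl, mult_INR. pose proof (not_0_INR (S i) ltac:(lia)). field. auto. }
  rewrite <- E. apply sR_ext. intros k Hk. unfold Xi, Binomial.C.
  pose proof (INR_fact_neq_0 k). pose proof (INR_fact_neq_0 (i - k)).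
  destruct (Nat.odd k); field; auto.
Qed.

Definition cr (k : nat) : R := if Nat.odd k then - xi_neg k else 0.

Lemma reg_identity' : forall i,
  Cplus (lincomb c_reg tT i) (Copp (c_minus 0 i)) = Cplus (c_pref i) (c_reg i).
Proof.
  intros. rewrite lincomb_tT.
  rewrite (sC_ext _ _ (fun k => RtoC (cr k * ((-1) ^ (i - k) * Binomial.C i k)))).
  2:{ intros. rewrite (RtoC_mult (cr k)). f_equal. unfold c_reg, cr. destruct (Nat.odd k); reflexivity. }
  rewrite sC_RtoC. unfold c_minus, c_pref.
  replace (c_reg i) with (RtoC (cr i)) by (unfold c_reg, cr; destruct (Nat.odd i); reflexivity).
  rewrite <- RtoC_opp, <- !RtoC_plus. f_equal.
  rewrite <- sR_sum_f, sR_S. rewrite Nat.sub_diag, C_n_n.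
  rewrite (sR_ext _ _ (fun k => (-1) ^ i * ((if Nat.odd k then xi_neg k else 0) * Binomial.C i k))).
  - rewrite sR_scal_l, Xi_identity. change (INR 0) with 0. rewrite Rplus_0_l. change ((-1) ^ S i) with (-1 * (-1) ^ i).
    unfold Rdiv. field. apply not_0_INR. lia.
  - intros k Hk. unfold cr. destruct (Nat.odd k) eqn:Ho.
    + replace ((-1) ^ i) with ((-1) ^ k * (-1) ^ (i - k)) by (rewrite <- pow_add; f_equal; lia).
      rewrite (odd_pow k Ho). ring.
    + ring.
Qed.

Lemma reg_identity : forall i,
  Cplus (lincomb c_reg tT i) (Copp (c_minus 0 i)) = Cplus (c_pref i) (c_reg i).
Proof. exact reg_identity'. Qed.

Section Alg.
Variable z : C.
Definition RN (N : nat) : ser := atz z (prod_factors tvar N).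
Definition XN (N : nat) : ser :=
  mulS (addS oneS (EL z (c_minus N))) (addS oneS (EL z (c_minus (S N)))).
Definition EM0 : ser := EL z (fun i => Copp (c_minus 0 i)).

Lemma RN_S : forall N, RN (S N) =
  mulS (RN N) (mulS (addS oneS (EL z (c_plus N))) (addS oneS (EL z (c_minus N)))).
Proof. intros. unfold RN. simpl prod_factors. rewrite atz_mul, !lincomb_tvar. reflexivity. Qed.

Lemma EM0_inv : mulS EM0 (EL z (c_minus 0)) = oneS.
Proof.
  unfold EM0. rewrite EL_mul. rewrite <- (EL_zero z). f_equal.
  apply functional_extensionality. intro i. ring.
Qed.

Lemma PF_T : forall N, atz z (prod_factors tT (S N)) = mulS EM0 (mulS (RN N) (XN N)).
Proof.
  induction N.
  - simpl prod_factors. rewrite atz_mul, atz_one, !atz_mul, !atz_add, !atz_one, !atz_explin.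
    rewrite lincomb_plus0_tT, lincomb_minus_tT. unfold RN, XN. simpl prod_factors. rewrite atz_one.
    fold EM0. 
    replace (addS oneS EM0) with (mulS EM0 (addS oneS (EL z (c_minus 0)))).
    + ring.
    + replace (mulS EM0 (addS oneS (EL z (c_minus 0)))) with (addS EM0 (mulS EM0 (EL z (c_minus 0)))) by ring.
      rewrite EM0_inv. ring.
  - change (prod_factors tT (S (S N))) with
      (fps_mul (prod_factors tT (S N)) (fps_mul (fps_add fps_one (fps_explin (lincomb (c_plus (S N)) tT)))
         (fps_add fps_one (fps_explin (lincomb (c_minus (S N)) tT))))).
    rewrite atz_mul, IHN, !atz_mul, !atz_add, !atz_one, !atz_explin.
    rewrite lincomb_plusS_tT, lincomb_minus_tT. rewrite RN_S. unfold XN. ring.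
Qed.

Lemma main_alg : forall N,
  atz z (Omega_partial tT (S N)) = mulS (atz z (fps_mul prefactor (Omega_partial tvar N))) (XN N).
Proof.
  intros. unfold Omega_partial. rewrite !atz_mul, PF_T. fold (RN N).
  unfold prefactor. rewrite !atz_explin, lincomb_tvar.
  transitivity (mulS (mulS (EL z (lincomb c_reg tT)) EM0) (mulS (RN N) (XN N))). ring.
  unfold EM0. rewrite EL_mul.
  replace (fun i => Cplus (lincomb c_reg tT i) (Copp (c_minus 0 i))) with
     (fun i => Cplus (c_pref i) (c_reg i)).
  2:{ apply functional_extensionality. intro i. symmetry. apply reg_identity. }
  rewrite <- EL_mul, lincomb_tvar. ring.
Qed.
End Alg.

Lemma exp_le : forall a b, a <= b -> exp a <= exp b.
Proof. intros. destruct (Rle_lt_or_eq_dec a b H). left; apply exp_increasing; auto. subst; lra. Qed.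

Lemma exp_mul_INR : forall a n, exp (a * INR n) = exp a ^ n.
Proof.
  induction n. simpl. rewrite Rmult_0_r, exp_0. reflexivity.
  rewrite S_INR. replace (a * (INR n + 1)) with (a + a * INR n) by ring.
  rewrite exp_plus, IHn. simpl. ring.
Qed.

Lemma taylor_term : forall x D, 0 <= x -> x ^ D / INR (fact D) <= exp x.
Proof.
  intros. eapply Rle_trans; [| apply (exp_ge_taylor x D H)].
  destruct D. simpl. lra. rewrite tech5.
  assert (0 <= sum_f_R0 (fun k => x ^ k / INR (fact k)) D).
  { apply cond_pos_sum. intros. apply Rmult_le_pos. apply pow_le; auto.
    apply Rlt_le, Rinv_0_lt_compat, INR_fact_lt_0. }
  lra.
Qed.

Lemma Cmod_cexp : forall w, Cmod (cexp w) = exp (fst w).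
Proof.
  intros [a b]. unfold Cmod, cexp. simpl fst; simpl snd.
  replace ((exp a * cos b) ^ 2 + (exp a * sin b) ^ 2) with (exp a ^ 2).
  - apply sqrt_pow2. apply Rlt_le, exp_pos.
  - rewrite <- (Rmult_1_r (exp a ^ 2)) at 1. rewrite <- (sin2_cos2 b). unfold Rsqr. ring.
Qed.

Lemma fst_2pi : forall l z, fst (Cmult two_pi_i (Cmult (RtoC l) z)) = - (2 * PI * l * Im z).
Proof. intros l [x y]. unfold two_pi_i. simpl. ring. Qed.

Lemma Cmod_cpow : forall w k, Cmod (cpow w k) = Cmod w ^ k.
Proof. induction k; simpl. apply Cmod_1. rewrite Cmod_mult, IHk. reflexivity. Qed.

Lemma Cmod_2pi : Cmod two_pi_i = 2 * PI.
Proof.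
  unfold Cmod, two_pi_i. simpl fst; simpl snd.
  replace (0 ^ 2 + (2 * PI) ^ 2) with ((2 * PI) ^ 2) by ring.
  apply sqrt_pow2. pose proof PI_RGT_0. lra.
Qed.

Lemma Cmod_ediv : forall w k, Cmod (ediv w k) <= Cmod w ^ k.
Proof.
  intros. unfold ediv. rewrite Cmod_div by apply INR_fact_C. rewrite Cmod_cpow, Cmod_R.
  rewrite Rabs_pos_eq by (apply pos_INR).
  assert (1 <= INR (fact k)). { apply (le_INR 1). pose proof (lt_O_fact k). lia. }
  unfold Rdiv. rewrite <- (Rmult_1_r (Cmod w ^ k)) at 2. apply Rmult_le_compat_l.
  apply pow_le, Cmod_ge_0. rewrite <- Rinv_1. apply Rinv_le_contravar; lra.
Qed.

Lemma geo_bound : forall y x, 1 <= y -> sR (S x) (fun k => y ^ k) <= (2 * y) ^ x.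
Proof.
  intros y x Hy. induction x.
  - rewrite sR_S, sR_0. simpl. lra.
  - rewrite sR_S. rewrite Rpow_mult_distr in *.
    assert (y ^ x <= y ^ S x) by (apply Rle_pow; auto).
    assert (1 <= 2 ^ x) by (apply pow_R1_Rle; lra).
    assert (0 <= y ^ S x) by (apply pow_le; lra).
    simpl pow at 3. simpl pow at 3.
    assert (2 ^ x * y ^ x <= 2 ^ x * y ^ S x) by (apply Rmult_le_compat_l; [lra|auto]).
    nra.
Qed.

Lemma nrm_Pf_bound : forall a phi y, 1 <= y ->
  (forall j k, (j < length a)%nat -> Cmod (phi j k) <= y ^ k) ->
  nrm a (Pf phi) <= (2 * y) ^ (list_sum a).
Proof.
  induction a as [|x s IH]; intros.
  - rewrite nrm_nil, Pf_nil, Cmod_1. simpl. lra.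
  - rewrite nrm_cons. simpl list_sum. rewrite pow_add.
    rewrite (sR_ext _ _ (fun k => Cmod (phi 0%nat k) * nrm s (Pf (fun j => phi (S j))))).
    2:{ intros. rewrite sec_Pf, nrm_scal. reflexivity. }
    rewrite sR_scal_r.
    assert (Hs : nrm s (Pf (fun j => phi (S j))) <= (2 * y) ^ list_sum s).
    { apply IH; auto. intros. apply H0. simpl. lia. }
    assert (Hx : sR (S x) (fun k => Cmod (phi 0%nat k)) <= (2 * y) ^ x).
    { eapply Rle_trans; [| apply geo_bound; auto]. apply sR_le. intros. apply H0. simpl. lia. }
    apply Rmult_le_compat; auto. apply sR_nonneg. intros; apply Cmod_ge_0. apply nrm_nonneg.
Qed.

Lemma nrm_one : forall a, nrm a oneS = 1.
Proof.
  induction a as [|x s IH].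
  - rewrite nrm_nil. unfold oneS. simpl. apply Cmod_1.
  - rewrite nrm_cons, sR_first, sec_oneS_0, IH.
    rewrite (sR_ext _ _ (fun _ => 0)). 2:{ intros. rewrite sec_oneS_S, nrm_zero. auto. }
    replace (sR x (fun _ => 0)) with 0. ring.
    induction x; auto. rewrite sR_S, <- IHx. ring.
Qed.

Definition qz (y : R) : R := exp (- (PI * y)).
Definition Dg (a : list nat) : nat := (length a * list_sum a)%nat.
Definition K0 (a : list nat) (y : R) : R :=
  32 ^ (list_sum a) * (INR (fact (Dg a)) / (PI * y) ^ (Dg a)) * exp (2 * PI * y).

Lemma EL_bound : forall a z N (l : nat -> R), 0 < Im z ->
  (forall j, Rabs (l j) <= 2 * (INR N + 2) ^ j) -> INR N <= l 1%nat ->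
  nrm a (EL z (fun j => RtoC (l j))) <= K0 a (Im z) * qz (Im z) ^ N.
Proof.
  intros a z N l Hy Hl H1. pose proof PI_RGT_0 as Hpi. pose proof PI_4 as Hpi4.
  set (y := Im z) in *. set (Y := 16 * (INR N + 2) ^ length a).
  assert (HN : 0 <= INR N) by apply pos_INR.
  assert (HY : 1 <= Y).
  { unfold Y. assert (1 <= (INR N + 2) ^ length a) by (apply pow_R1_Rle; lra). lra. }
  rewrite EL_form, nrm_scal, Cmod_cexp, fst_2pi. fold y.
  assert (HP : nrm a (Pf (phiL (fun j => RtoC (l j))))  <= (2 * Y) ^ list_sum a).
  { apply nrm_Pf_bound; auto. intros j k Hj. unfold phiL.
    destruct (Nat.eqb j 1).
    - destruct (Nat.eqb k 0). rewrite Cmod_1. simpl. destruct k; simpl; try lra.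
      assert (1 <= Y ^ k) by (apply pow_R1_Rle; lra). nra.
      rewrite Cmod_0. apply pow_le. lra.
    - eapply Rle_trans. apply Cmod_ediv. apply pow_incr. split. apply Cmod_ge_0.
      rewrite Cmod_mult, Cmod_2pi, Cmod_R. unfold Y.
      assert ((INR N + 2) ^ j <= (INR N + 2) ^ length a) by (apply Rle_pow; lia || lra).
      specialize (Hl j). assert (Rabs (l j) <= 2 * (INR N + 2) ^ length a) by lra.
      pose proof (Rabs_pos (l j)).
      apply Rle_trans with (8 * Rabs (l j)). nra. lra. }
  assert (HT : (PI * y) ^ Dg a * (INR N + 2) ^ Dg a <= INR (fact (Dg a)) * exp (PI * y * (INR N + 2))).
  { pose proof (taylor_term (PI * y * (INR N + 2)) (Dg a)).
    rewrite <- Rpow_mult_distr.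
    assert (0 < INR (fact (Dg a))) by apply INR_fact_lt_0.
    assert (0 <= PI * y * (INR N + 2)) by (apply Rmult_le_pos; nra).
    specialize (H H2). unfold Rdiv in H.
    apply (Rmult_le_compat_l (INR (fact (Dg a)))) in H; [| lra].
    rewrite <- Rmult_assoc, (Rmult_comm _ (_ ^ _)), Rmult_assoc, Rinv_r, Rmult_1_r in H; lra. }
  replace ((2 * Y) ^ list_sum a) with (32 ^ list_sum a * (INR N + 2) ^ Dg a) in HP.
  2:{ unfold Y, Dg. rewrite <- Rmult_assoc, Rpow_mult_distr, pow_mult. replace (2 * 16) with 32 by ring. reflexivity. }
  assert (Hpos : 0 < (PI * y) ^ Dg a) by (apply pow_lt; nra).
  assert (H2 : (INR N + 2) ^ Dg a <= INR (fact (Dg a)) / (PI * y) ^ Dg a * exp (PI * y * (INR N + 2))).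
  { unfold Rdiv. rewrite Rmult_assoc, (Rmult_comm (/ _)), <- Rmult_assoc.
    apply (Rmult_le_reg_r ((PI * y) ^ Dg a)); auto.
    rewrite Rmult_assoc, Rinv_l, Rmult_1_r by lra. lra. }
  unfold K0, qz. rewrite <- exp_mul_INR.
  eapply Rle_trans. apply Rmult_le_compat_l. apply Rlt_le, exp_pos. apply HP.
  eapply Rle_trans. apply Rmult_le_compat_l. apply Rlt_le, exp_pos.
  apply Rmult_le_compat_l. apply pow_le; lra. apply H2.
  assert (exp (- (2 * PI * l 1%nat * y)) <= exp (- (2 * PI * INR N * y))).
  { apply exp_le. assert (0 < PI * y) by nra. assert (0 <= (l 1%nat - INR N) * (PI * y)) by (apply Rmult_le_pos; lra). nra. }
  assert (exp (- (2 * PI * INR N * y)) * exp (PI * y * (INR N + 2)) = exp (2 * PI * y) * exp (- (PI * y) * INR N)).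
  { rewrite <- !exp_plus. f_equal. ring. }
  assert (0 <= 32 ^ list_sum a * (INR (fact (Dg a)) / (PI * y) ^ Dg a)).
  { apply Rmult_le_pos. apply pow_le; lra. apply Rlt_le. apply Rdiv_lt_0_compat; auto. apply INR_fact_lt_0. }
  assert (0 < exp (PI * y * (INR N + 2))) by apply exp_pos.
  set (A := exp (- (2 * PI * l 1%nat * y))) in *. set (B := exp (- (2 * PI * INR N * y))) in *.
  set (E := exp (PI * y * (INR N + 2))) in *. set (c := 32 ^ list_sum a * (INR (fact (Dg a)) / (PI * y) ^ Dg a)) in *.
  replace (A * (32 ^ list_sum a * (INR (fact (Dg a)) / (PI * y) ^ Dg a * E))) with (c * (A * E)) by (unfold c; ring).
  replace (c * exp (2 * PI * y) * exp (- (PI * y) * INR N)) with (c * (B * E)) by (rewrite H0; ring).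
  apply Rmult_le_compat_l; auto. apply Rmult_le_compat_r; lra.
Qed.
Lemma limC_intro : forall (v : nat -> C) (l : C),
  (forall eps, 0 < eps -> exists N0, forall n, (N0 <= n)%nat -> Cmod (Cminus (v n) l) < eps) ->
  filterlim v eventually (locally l).
Proof.
  intros v l H P HP. destruct (locally_norm_le_locally (K:=C_AbsRing) (V:=C_NormedModule) l P HP) as [eps Heps].
  destruct (H eps (cond_pos eps)) as [N0 HN0]. exists N0. intros n Hn.
  apply Heps. unfold ball_norm. change (Cmod (Cminus (v n) l) < eps). apply HN0; auto.
Qed.

Lemma limC_elim : forall (v : nat -> C) (l : C), filterlim v eventually (locally l) ->
  forall eps, 0 < eps -> exists N0, forall n, (N0 <= n)%nat -> Cmod (Cminus (v n) l) < eps.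
Proof.
  intros v l H eps He.
  assert (Hl : locally l (fun w => Cmod (Cminus w l) < eps)).
  { apply (locally_le_locally_norm (K:=C_AbsRing) (V:=C_NormedModule)). exists (mkposreal eps He). intros w Hw.
    unfold ball_norm in Hw. change (Cmod (Cminus w l) < eps) in Hw. auto. }
  destruct (H _ Hl) as [N0 HN0]. exists N0. auto.
Qed.

Lemma conv_summable : forall (u : nat -> C) (w : nat -> R), ex_series w ->
  (forall N, Cmod (Cminus (u (S N)) (u N)) <= w N) ->
  exists l, filterlim u eventually (locally l).
Proof.
  intros u w Hw Hd.
  assert (Hs : ex_series (V := C_CompleteNormedModule) (fun N => Cminus (u (S N)) (u N))).
  { apply (ex_series_le _ w); auto. }
  destruct Hs as [L HL]. exists (Cplus (u 0%nat) L).
  assert (Hsum : forall N, sum_n (fun N => Cminus (u (S N)) (u N)) N = Cminus (u (S N)) (u 0%nat)).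
  { induction N. rewrite sum_O. reflexivity. rewrite sum_Sn, IHN. change (Cplus (Cminus (u (S N)) (u 0%nat)) (Cminus (u (S (S N))) (u (S N))) = Cminus (u (S (S N))) (u 0%nat)). ring. }
  apply limC_intro. intros eps He. destruct (limC_elim _ _ HL eps He) as [N0 HN0].
  exists (S N0). intros n Hn. destruct n. lia.
  specialize (HN0 n ltac:(lia)). rewrite Hsum in HN0.
  replace (Cminus (u (S n)) (Cplus (u 0%nat) L)) with (Cminus (Cminus (u (S n)) (u 0%nat)) L) by ring. auto.
Qed.

Lemma limC_shift : forall (v : nat -> C) l, filterlim (fun n => v (S n)) eventually (locally l) ->
  filterlim v eventually (locally l).
Proof.
  intros. apply limC_intro. intros eps He. destruct (limC_elim _ _ H eps He) as [N0 HN0].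
  exists (S N0). intros n Hn. destruct n. lia. apply HN0. lia.
Qed.

Lemma limC_close : forall (u v : nat -> C) (e : nat -> R) l,
  filterlim u eventually (locally l) ->
  (forall n, Cmod (Cminus (v n) (u n)) <= e n) ->
  (forall eps, 0 < eps -> exists N0, forall n, (N0 <= n)%nat -> e n < eps) ->
  filterlim v eventually (locally l).
Proof.
  intros u v e l Hu Hvu He. apply limC_intro. intros eps Heps.
  destruct (limC_elim _ _ Hu (eps/2) ltac:(lra)) as [N1 H1].
  destruct (He (eps/2) ltac:(lra)) as [N2 H2].
  exists (max N1 N2). intros n Hn.
  replace (Cminus (v n) l) with (Cplus (Cminus (v n) (u n)) (Cminus (u n) l)) by ring.
  eapply Rle_lt_trans. apply Cmod_triangle.
  specialize (H1 n ltac:(lia)). specialize (H2 n ltac:(lia)). specialize (Hvu n). lra.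
Qed.

Section Ana.
Variable a : list nat.
Variable z : C.
Hypothesis Hy : 0 < Im z.

Definition W (N : nat) : R := K0 a (Im z) * qz (Im z) ^ N.

Lemma qz_bounds : 0 < qz (Im z) < 1.
Proof.
  unfold qz. split. apply exp_pos. rewrite <- exp_0. apply exp_increasing.
  pose proof PI_RGT_0. nra.
Qed.

Lemma K0_pos : 0 <= K0 a (Im z).
Proof.
  unfold K0. pose proof PI_RGT_0. apply Rmult_le_pos. apply Rmult_le_pos.
  apply pow_le; lra. apply Rlt_le, Rdiv_lt_0_compat. apply INR_fact_lt_0. apply pow_lt. nra.
  apply Rlt_le, exp_pos.
Qed.

Lemma W_nonneg : forall N, 0 <= W N.
Proof. intros. unfold W. apply Rmult_le_pos. apply K0_pos. apply pow_le. pose proof qz_bounds. lra. Qed.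

Lemma sR_W : forall N, sR N W <= K0 a (Im z) / (1 - qz (Im z)).
Proof.
  intros. pose proof qz_bounds as [q0 q1]. pose proof K0_pos.
  assert (forall N, sR N W * (1 - qz (Im z)) = K0 a (Im z) * (1 - qz (Im z) ^ N)).
  { induction N0. rewrite sR_0. simpl. ring. rewrite sR_S, Rmult_plus_distr_r, IHN0. unfold W. simpl. ring. }
  apply (Rmult_le_reg_r (1 - qz (Im z))). lra. rewrite H0. unfold Rdiv.
  rewrite Rmult_assoc, Rinv_l by lra. rewrite Rmult_1_r.
  assert (0 <= qz (Im z) ^ N) by (apply pow_le; lra). nra.
Qed.

Lemma ex_series_cW : forall c, ex_series (fun N => c * W N).
Proof.
  intros. pose proof qz_bounds.
  assert (Hg : ex_series (fun n => qz (Im z) ^ n)).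
  { eexists. apply is_series_geom. rewrite Rabs_pos_eq; lra. }
  apply (ex_series_scal_l (c * K0 a (Im z))) in Hg.
  eapply ex_series_ext; [| exact Hg]. intros n. unfold W. change (Rmult (c * K0 a (Im z)) (qz (Im z) ^ n) = c * (K0 a (Im z) * qz (Im z) ^ n)). ring.
Qed.

Lemma W_small : forall c, 0 <= c -> forall eps, 0 < eps -> exists N0, forall n, (N0 <= n)%nat -> c * W n < eps.
Proof.
  intros c Hc eps He. pose proof qz_bounds. pose proof K0_pos.
  assert (Hl : is_lim_seq (fun n => qz (Im z) ^ n) 0) by (apply is_lim_seq_geom; rewrite Rabs_pos_eq; lra).
  apply is_lim_seq_spec in Hl.
  set (M := c * K0 a (Im z) + 1).
  assert (0 < eps / M) by (apply Rdiv_lt_0_compat; unfold M; nra).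
  destruct (Hl (mkposreal _ H1)) as [N0 HN0]. exists N0. intros n Hn.
  specialize (HN0 n Hn). simpl in HN0. rewrite Rminus_0_r, Rabs_pos_eq in HN0 by (apply pow_le; lra).
  unfold W. assert (c * K0 a (Im z) <= M) by (unfold M; lra).
  assert (0 <= qz (Im z) ^ n) by (apply pow_le; lra).
  apply Rle_lt_trans with (M * qz (Im z) ^ n). rewrite <- Rmult_assoc. apply Rmult_le_compat_r; auto.
  apply (Rmult_lt_compat_l M) in HN0; [| unfold M; nra]. unfold Rdiv in HN0.
  rewrite (Rmult_comm eps), <- Rmult_assoc, Rinv_r, Rmult_1_l in HN0 by (unfold M; nra). auto.
Qed.

Lemma powbound : forall N j m x, 0 <= x <= INR N + 2 -> Rabs ((-1) ^ m * x ^ j) <= (INR N + 2) ^ j.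
Proof.
  intros. rewrite Rabs_mult, pow_1_abs, Rmult_1_l, <- RPow_abs. apply pow_incr.
  rewrite Rabs_pos_eq; lra.
Qed.

Lemma EL_one_bound : forall N (f : nat -> nat) x, 0 <= x <= INR N + 2 -> INR N <= (-1) ^ (f 1%nat) * x ->
  nrm a (EL z (fun j => RtoC ((-1) ^ (f j) * x ^ j))) <= W N.
Proof.
  intros. apply EL_bound; auto.
  - intros j. eapply Rle_trans. apply powbound; eauto.
    assert (0 <= (INR N + 2) ^ j) by (apply pow_le; pose proof (pos_INR N); lra). lra.
  - simpl. rewrite Rmult_1_r. lra.
Qed.

Lemma EL_two_bound : forall N (f1 f2 : nat -> nat) x1 x2, 0 <= x1 <= INR N + 2 -> 0 <= x2 <= INR N + 2 ->
  INR N <= (-1) ^ (f1 1%nat) * x1 + (-1) ^ (f2 1%nat) * x2 ->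
  nrm a (EL z (fun j => RtoC ((-1) ^ (f1 j) * x1 ^ j + (-1) ^ (f2 j) * x2 ^ j))) <= W N.
Proof.
  intros. apply EL_bound; auto.
  - intros j. eapply Rle_trans. apply Rabs_triang.
    pose proof (powbound N j (f1 j) x1 H). pose proof (powbound N j (f2 j) x2 H0). lra.
  - simpl. rewrite !Rmult_1_r. lra.
Qed.

Definition FN (N : nat) : ser :=
  mulS (addS oneS (EL z (c_plus N))) (addS oneS (EL z (c_minus N))).

Lemma three_bound : forall (L1 L2 : lin) N,
  nrm a (EL z L1) <= W N -> nrm a (EL z L2) <= W N ->
  nrm a (EL z (fun i => Cplus (L1 i) (L2 i))) <= W N ->
  nrm a (subS (mulS (addS oneS (EL z L1)) (addS oneS (EL z L2))) oneS) <= 3 * W N.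
Proof.
  intros. replace (subS (mulS (addS oneS (EL z L1)) (addS oneS (EL z L2))) oneS)
    with (addS (addS (EL z L1) (EL z L2)) (mulS (EL z L1) (EL z L2))) by ring.
  rewrite EL_mul. eapply Rle_trans. apply nrm_add.
  pose proof (nrm_add a (EL z L1) (EL z L2)). lra.
Qed.

Lemma c_plus_form : forall N, c_plus N = fun j => RtoC ((-1) ^ ((fun _ => 0%nat) j) * (INR N + /2) ^ j).
Proof. intros. apply functional_extensionality. intro j. unfold c_plus. f_equal. simpl. ring. Qed.
Lemma c_minus_form : forall N, c_minus N = fun j => RtoC ((-1) ^ (S j) * (INR N + /2) ^ j).
Proof. reflexivity. Qed.

Lemma FN_bound : forall N, nrm a (subS (FN N) oneS) <= 3 * W N.
Proof.
  intros. pose proof (pos_INR N). unfold FN. apply three_bound; auto.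
  - rewrite c_plus_form. apply EL_one_bound; simpl; lra.
  - rewrite c_minus_form. apply EL_one_bound; simpl; lra.
  - rewrite c_plus_form, c_minus_form.
    replace (fun i => Cplus (RtoC ((-1) ^ 0 * (INR N + / 2) ^ i)) (RtoC ((-1) ^ S i * (INR N + / 2) ^ i)))
      with (fun i => RtoC ((-1) ^ ((fun _ => 0%nat) i) * (INR N + / 2) ^ i + (-1) ^ (S i) * (INR N + / 2) ^ i)).
    + apply EL_two_bound; simpl; lra.
    + apply functional_extensionality. intro i. apply RtoC_plus.
Qed.

Lemma XN_bound : forall N, nrm a (subS (XN z N) oneS) <= 3 * W N.
Proof.
  intros. pose proof (pos_INR N). unfold XN. apply three_bound; auto.
  - rewrite c_minus_form. apply EL_one_bound; simpl; lra.
  - rewrite c_minus_form. rewrite S_INR. apply EL_one_bound; simpl; lra.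
  - rewrite !c_minus_form. rewrite S_INR.
    replace (fun i => Cplus (RtoC ((-1) ^ S i * (INR N + / 2) ^ i)) (RtoC ((-1) ^ S i * (INR N + 1 + / 2) ^ i)))
      with (fun i => RtoC ((-1) ^ (S i) * (INR N + / 2) ^ i + (-1) ^ (S i) * (INR N + 1 + / 2) ^ i)).
    + apply EL_two_bound; simpl; lra.
    + apply functional_extensionality. intro i. apply RtoC_plus.
Qed.
End Ana.

Section Fin.
Variable a : list nat.
Variable z : C.
Hypothesis Hy : 0 < Im z.

Definition uB (N : nat) : ser := atz z (fps_mul prefactor (Omega_partial tvar N)).

Lemma uB_S : forall N, uB (S N) = mulS (uB N) (FN z N).
Proof.
  intros. unfold uB, Omega_partial. rewrite !atz_mul.
  change (atz z (prod_factors tvar (S N))) with (RN z (S N)).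
  change (atz z (prod_factors tvar N)) with (RN z N).
  rewrite RN_S. unfold FN. ring.
Qed.

Lemma nrm_uB : forall N, nrm a (uB N) <= nrm a (uB 0) * exp (3 * sR N (W a z)).
Proof.
  induction N.
  - rewrite sR_0, Rmult_0_r, exp_0. lra.
  - rewrite uB_S. eapply Rle_trans. apply nrm_mul.
    replace (FN z N) with (addS oneS (subS (FN z N) oneS)) by ring.
    assert (H1 : nrm a (addS oneS (subS (FN z N) oneS)) <= exp (3 * W a z N)).
    { eapply Rle_trans. apply nrm_add. rewrite nrm_one.
      eapply Rle_trans; [| apply exp_ineq1_le]. pose proof (FN_bound a z Hy N). lra. }
    rewrite sR_S, Rmult_plus_distr_l, exp_plus, <- Rmult_assoc.
    apply Rmult_le_compat; auto; apply nrm_nonneg.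
Qed.

Definition Kb : R := nrm a (uB 0) * exp (3 * (K0 a (Im z) / (1 - qz (Im z)))).

Lemma Kb_pos : 0 <= Kb.
Proof. unfold Kb. apply Rmult_le_pos. apply nrm_nonneg. apply Rlt_le, exp_pos. Qed.

Lemma nrm_uB_K : forall N, nrm a (uB N) <= Kb.
Proof.
  intros. eapply Rle_trans. apply nrm_uB. unfold Kb. apply Rmult_le_compat_l. apply nrm_nonneg.
  apply exp_le. pose proof (sR_W a z Hy N). lra.
Qed.

Lemma mul_err : forall N X, nrm a (subS X oneS) <= 3 * W a z N ->
  Cmod (Cminus (mulS (uB N) X a) (uB N a)) <= Kb * (3 * W a z N).
Proof.
  intros.
  assert (E : mulS (uB N) X = addS (uB N) (mulS (uB N) (subS X oneS))) by ring.
  rewrite E. unfold addS. replace (Cminus (Cplus (uB N a) (mulS (uB N) (subS X oneS) a)) (uB N a))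
    with (mulS (uB N) (subS X oneS) a) by ring.
  eapply Rle_trans. apply coef_le_nrm. eapply Rle_trans. apply nrm_mul.
  apply Rmult_le_compat; auto. apply nrm_nonneg. apply nrm_nonneg. apply nrm_uB_K.
Qed.

Lemma u_conv : exists l, filterlim (fun N => uB N a) eventually (locally l).
Proof.
  apply (conv_summable _ (fun N => (Kb * 3) * W a z N)).
  - apply ex_series_cW; auto.
  - intros. rewrite uB_S. rewrite Rmult_assoc. apply mul_err. apply FN_bound; auto.
Qed.
End Fin.

Theorem theorem2p1 :
  forall (a : list nat) (z : C), 0 < Im z ->
  exists l : C,
    filterlim (fun N => Omega_partial tT N a z) eventually (locally l) /\
    filterlim (fun N => fps_mul prefactor (Omega_partial tvar N) a z)
      eventually (locally l).
Proof.
  intros a z Hy. destruct (u_conv a z Hy) as [l Hl]. exists l. split.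
  - apply limC_shift.
    apply (limC_close (fun N => uB z N a) _ (fun N => (Kb a z * 3) * W a z N)); auto.
    + intros n. change (Omega_partial tT (S n) a z) with (atz z (Omega_partial tT (S n)) a).
      rewrite main_alg. rewrite Rmult_assoc. apply mul_err; try assumption. apply XN_bound; auto.
    + apply W_small; auto. pose proof (Kb_pos a z). lra.
  - exact Hl.
Qed.
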